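(* Let $Q$ and $W$ satisfy the standing assumptions, let $l,m\in\mathbb N_0$ with $m\le l$, and let $\mathcal R=\{(x,\hat x)\in X\times\hat X^{I^l_m}:\hat x\in E^{I^l_m}(x)\}$. Then (i) $\mathcal R$ is a simulation relation from $Q$ to $\hat Q^{I^l_m}$ w.r.t. $U\times Y$ if and only if $Q$ is future unique w.r.t. $I^l_m$; and (ii) $\mathcal R^{-1}$ is a simulation relation from $\hat Q^{I^l_m}$ to $Q$ w.r.t. $W$ if and only if $Q$ is state-based asynchronously $l$-complete w.r.t. $I^l_m$.
   Context: Strings and signals: $\diamond$ is a symbol not in any other set considered. For a set $A$ and $l\in\mathbb N_0$, $A^l$ is the set of strings of length $l$ over $A$, indexed $\zeta=\zeta(0)\cdots\zeta(l-1)$; $\lambda$ is the empty string and $\cdot$ denotes concatenation. For a map $w$ on $\mathbb Z$ (or a string) and integers $t_1\le t_2$, $w|_{[t_1,t_2]}=w(t_1)\cdots w(t_2)$ is the string of length $t_2-t_1+1$ (absolute time forgotten); if $t_2<t_1$ it is $\lambda$. For a set $\mathcal S$ of such maps or strings, $\mathcal S|_{[t_1,t_2]}=\{s|_{[t_1,t_2]}:s\in\mathcal S\}$. State machines: a state machine is $Q=(X,U,Y,\delta,X_0)$ with $X_0\subseteq X$, $\delta\subseteq X\times U\times Y\times X$. Let $H_\delta(x)=\{y:\exists u,x'.\,(x,u,y,x')\in\delta\}$, $F_\delta(x,u)=\{x':\exists y\in H_\delta(x).\,(x,u,y,x')\in\delta\}$, $T_\delta(x)=\bigcup_{u\in U}F_\delta(x,u)$.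 The full behavior $\mathcal B_f(Q)$ is the set of $(\mu,\nu,\xi)\in(U\times Y\times X)^{\mathbb N_0}$ with $\xi(0)\in X_0$ and $(\xi(k),\mu(k),\nu(k),\xi(k+1))\in\delta$ for all $k\in\mathbb N_0$. $Q$ is live and reachable if every $x\in X_0$ is $\xi(0)$ for some $(\mu,\nu,\xi)\in\mathcal B_f(Q)$ and every $x\in X$ is $\xi(k)$ for some such trajectory and some $k$. Standing assumptions: $Q=(X,U,Y,\delta,X_0)$ is live and reachable and satisfies $(x,u,y,x')\in\delta\iff(x'\in F_\delta(x,u)\wedge y\in H_\delta(x))$ for all $x,x'\in X,u\in U,y\in Y$; the external signal space $W$ is finite and either $W=U\times Y$ or $W=Y$. The projection $\pi_W(u,y)$ is $(u,y)$ if $W=U\times Y$ and $y$ if $W=Y$ (likewise $\pi_{U\times Y}(u,y)=(u,y)$, $\pi_Y(u,y)=y$). Behaviors: for a state machine $Q'$ with input set $U$ and output set $Y$, $\mathcal B(Q')$ is the set of $w:\mathbb Z\to W\cup\{\diamond\}$ such that for some $(\mu,\nu,\xi)\in\mathcal B_f(Q')$, $w(k)=\diamond$ for $k<0$ and $w(k)=\pi_W(\mu(k),\nu(k))$ for $k\ge0$. $\mathcal B_S(Q)$ is the set of pairs $(w,\xi)$ of maps on $\mathbb Z$ with $w(k)=\xi(k)=\diamond$ for $k<0$ and $(w(k),\xi(k))=(\pi_W(\mu(k),\nu(k)),\xi'(k))$ for $k\ge0$, for some $(\mu,\nu,\xi')\in\mathcal B_f(Q)$. For a set $\mathcal B$ of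 maps on $\mathbb Z$, $\Pi_l(\mathcal B)=\bigcup_{k\in\mathbb N_0}\mathcal B|_{[k-l+1,k]}$. Corresponding strings: for integers $a,b$ and $x\in X$, $E^{[a,b]}(x)=\{\zeta:\exists(w,\xi)\in\mathcal B_S(Q),k\in\mathbb N_0:\ \xi(k)=x,\ \zeta=w|_{[k+a,k+b]}\}$. For $l,m\in\mathbb N_0$ with $m\le l$, $I^l_m=[m-l,m-1]$. Future uniqueness: $Q$ is future unique w.r.t. $I^l_m$ if for all $x\in X$ and $\zeta,\zeta'\in E^{I^l_m}(x)$, $\zeta|_{[l-m,l-1]}=\zeta'|_{[l-m,l-1]}$. State-based asynchronous $l$-completeness: $Q$ is state-based asynchronously $l$-complete w.r.t. $I^l_m$ if for all $x\in X$ and $\zeta\in\Pi_{l+1}(\mathcal B(Q))$, $\zeta|_{[0,l-1]}\in E^{I^l_m}(x)$ implies $\zeta\in E^{[m-l,m]}(x)$. Abstract state machine: $\hat Q^{I^l_m}=(\hat X^{I^l_m},U,Y,\hat\delta^{I^l_m},\hat X^{I^l_m}_0)$ with $\hat X^{I^l_m}=\bigcup_{x\in X}E^{I^l_m}(x)$, $\hat X^{I^l_m}_0=\bigcup_{x\in X_0}E^{I^l_m}(x)$, and $(\hat x,u,y,\hat x')\in\hat\delta^{I^l_m}$ iff (1) $\hat x'|_{[0,l-m-1]}=(\hat x|_{[0,l-m-1]}\cdot\pi_W(u,y))|_{[1,l-m]}$, (2) $\hat x|_{[l-m,l-1]}=(\pi_W(u,y)\cdot\hat x'|_{[l-m,l-2]})|_{[0,m-1]}$,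 and (3) there are $x,x'\in X$ with $\hat x\in E^{I^l_m}(x)$, $\hat x'\in E^{I^l_m}(x')$, $(x,u,y,x')\in\delta$. Simulation relations: for state machines $Q_i=(X_i,U,Y,\delta_i,X_{0,i})$, $i=1,2$, and $V\in\{U\times Y,Y\}$, a relation $\mathcal R\subseteq X_1\times X_2$ is a simulation relation from $Q_1$ to $Q_2$ w.r.t. $V$ if (a) for every $x_1\in X_{0,1}$ there is $x_2\in X_{0,2}$ with $(x_1,x_2)\in\mathcal R$, and (b) for all $(x_1,x_2)\in\mathcal R$ and $(x_1,u_1,y_1,x_1')\in\delta_1$ there exist $u_2,y_2,x_2'$ with $(x_2,u_2,y_2,x_2')\in\delta_2$, $(x_1',x_2')\in\mathcal R$ and $\pi_V(u_1,y_1)=\pi_V(u_2,y_2)$. $\mathcal R^{-1}=\{(x_2,x_1):(x_1,x_2)\in\mathcal R\}$. *)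

(* Defs.v *)
From Stdlib Require Import ZArith List.
Import ListNotations.
Set Implicit Arguments.
Open Scope Z_scope.

(* Strings are lists; the symbol "diamond" is None, signal values are Some w. *)

(* w|_[t1,t2] for a map on Z (lambda if t2 < t1) *)
Definition restrZ {A : Type} (w : Z -> A) (t1 t2 : Z) : list A :=
  map (fun i => w (t1 + Z.of_nat i)) (seq 0 (Z.to_nat (t2 - t1 + 1))).

(* zeta|_[a,b] for a string zeta = zeta(0)...zeta(n-1) (lambda if b < a);
   only used with 0 <= a and b < length zeta when b >= a *)
Definition restrL {A : Type} (s : list A) (a b : Z) : list A :=
  if b <? a then [] else firstn (Z.to_nat (b - a + 1)) (skipn (Z.to_nat a) s).

(* External signal space: b = true means W = U x Y, b = false means W = Y. *)
Definition Wt (U Y : Type) (b : bool) : Type := if b then (U * Y)%type else Y.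

Definition piW (U Y : Type) (b : bool) : U -> Y -> Wt U Y b :=
  match b return U -> Y -> Wt U Y b with
  | true => fun u y => (u, y)
  | false => fun u y => y
  end.

Definition W_finite (U Y : Type) (b : bool) : Prop :=
  exists l : list (Wt U Y b), forall w, In w l.

(* A state machine (X, U, Y, delta, X0); sset is the state set X as a subset
   of the carrier type st. *)
Record SM (U Y : Type) := mkSM {
  st : Type;
  sset : st -> Prop;
  trans : st -> U -> Y -> st -> Prop;
  init : st -> Prop }.
Arguments st {U Y}.
Arguments sset {U Y}.
Arguments trans {U Y}.
Arguments init {U Y}.

Section Defs.
Variables (X U Y : Type) (delta : X -> U -> Y -> X -> Prop) (X0 : X -> Prop).

Definition Hdelta (x : X) (y : Y) : Prop := exists u x', delta x u y x'.
Definition Fdelta (x : X) (u : U) (x' : X) : Prop :=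
  exists y, Hdelta x y /\ delta x u y x'.
Definition Tdelta (x x' : X) : Prop := exists u, Fdelta x u x'.

Definition full_beh (mu : nat -> U) (nu : nat -> Y) (xi : nat -> X) : Prop :=
  X0 (xi 0%nat) /\ forall k, delta (xi k) (mu k) (nu k) (xi (S k)).

Definition live_reachable : Prop :=
  (forall x, X0 x -> exists mu nu xi, full_beh mu nu xi /\ xi 0%nat = x) /\
  (forall x, exists mu nu xi k, full_beh mu nu xi /\ xi k = x).

Variable b : bool.

Definition Beh (w : Z -> option (Wt U Y b)) : Prop :=
  exists mu nu xi, full_beh mu nu xi /\
    forall k : Z, (k < 0 -> w k = None) /\
                  (0 <= k -> w k = Some (piW b (mu (Z.to_nat k)) (nu (Z.to_nat k)))).

Definition BS (w : Z -> option (Wt U Y b)) (xs : Z -> option X) : Prop :=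
  exists mu nu xi, full_beh mu nu xi /\
    forall k : Z, (k < 0 -> w k = None /\ xs k = None) /\
                  (0 <= k -> w k = Some (piW b (mu (Z.to_nat k)) (nu (Z.to_nat k)))
                             /\ xs k = Some (xi (Z.to_nat k))).

Definition Pi (l : nat) (B : (Z -> option (Wt U Y b)) -> Prop)
  (zeta : list (option (Wt U Y b))) : Prop :=
  exists w (k : nat), B w /\ zeta = restrZ w (Z.of_nat k - Z.of_nat l + 1) (Z.of_nat k).

Definition E (a b' : Z) (x : X) (zeta : list (option (Wt U Y b))) : Prop :=
  exists w xs (k : nat), BS w xs /\ xs (Z.of_nat k) = Some x /\
    zeta = restrZ w (Z.of_nat k + a) (Z.of_nat k + b').

Definition Ilo (l m : nat) : Z := Z.of_nat m - Z.of_nat l.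
Definition Ihi (m : nat) : Z := Z.of_nat m - 1.

Definition future_unique (l m : nat) : Prop :=
  forall x zeta zeta', E (Ilo l m) (Ihi m) x zeta -> E (Ilo l m) (Ihi m) x zeta' ->
    restrL zeta (Z.of_nat l - Z.of_nat m) (Z.of_nat l - 1)
    = restrL zeta' (Z.of_nat l - Z.of_nat m) (Z.of_nat l - 1).

Definition async_complete (l m : nat) : Prop :=
  forall x zeta, Pi (S l) Beh zeta ->
    E (Ilo l m) (Ihi m) x (restrL zeta 0 (Z.of_nat l - 1)) ->
    E (Ilo l m) (Z.of_nat m) x zeta.

Definition Xhat (l m : nat) (s : list (option (Wt U Y b))) : Prop :=
  exists x, E (Ilo l m) (Ihi m) x s.
Definition X0hat (l m : nat) (s : list (option (Wt U Y b))) : Prop :=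
  exists x, X0 x /\ E (Ilo l m) (Ihi m) x s.
Definition deltahat (l m : nat) (s : list (option (Wt U Y b))) (u : U) (y : Y)
  (s' : list (option (Wt U Y b))) : Prop :=
  let L := Z.of_nat l in let M := Z.of_nat m in
  restrL s' 0 (L - M - 1) = restrL (restrL s 0 (L - M - 1) ++ [Some (piW b u y)]) 1 (L - M) /\
  restrL s (L - M) (L - 1) = restrL (Some (piW b u y) :: restrL s' (L - M) (L - 2)) 0 (M - 1) /\
  exists x x', E (Ilo l m) (Ihi m) x s /\ E (Ilo l m) (Ihi m) x' s' /\ delta x u y x'.

Definition Qhat (l m : nat) : SM U Y :=
  @mkSM U Y (list (option (Wt U Y b))) (Xhat l m) (deltahat l m) (X0hat l m).

Definition Rel (l m : nat) (x : X) (s : list (option (Wt U Y b))) : Prop :=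
  E (Ilo l m) (Ihi m) x s.

End Defs.

Definition Qm (X U Y : Type) (delta : X -> U -> Y -> X -> Prop) (X0 : X -> Prop) : SM U Y :=
  @mkSM U Y X (fun _ => True) delta X0.

(* Simulation relation from M1 to M2 w.r.t. V (V = U x Y if v = true, V = Y otherwise) *)
Definition sim_rel (U Y : Type) (v : bool) (M1 M2 : SM U Y)
  (R : st M1 -> st M2 -> Prop) : Prop :=
  (forall x1 x2, R x1 x2 -> sset M1 x1 /\ sset M2 x2) /\
  (forall x1, init M1 x1 -> exists x2, init M2 x2 /\ R x1 x2) /\
  (forall x1 x2 u1 y1 x1', R x1 x2 -> trans M1 x1 u1 y1 x1' ->
     exists u2 y2 x2', trans M2 x2 u2 y2 x2' /\ R x1' x2' /\
                       piW v u1 y1 = piW v u2 y2).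

(* Main.v *)
Require Import Defs.
From Stdlib Require Import ZArith List Lia.
Import ListNotations.
Open Scope Z_scope.

Lemma length_restrZ {A} (w : Z -> A) a b : length (restrZ w a b) = Z.to_nat (b - a + 1).
Proof. unfold restrZ. now rewrite length_map, length_seq. Qed.

Lemma nth_restrZ {A} (w : Z -> A) a b i d : (i < Z.to_nat (b - a + 1))%nat ->
  nth i (restrZ w a b) d = w (a + Z.of_nat i).
Proof.
  intros H. unfold restrZ.
  rewrite (nth_indep _ d ((fun i => w (a + Z.of_nat i)) 0%nat)) by (rewrite length_map, length_seq; lia).
  rewrite (map_nth (fun i => w (a + Z.of_nat i))), seq_nth by lia. reflexivity.
Qed.

Lemma restrZ_eq {A} (w w' : Z -> A) a b a' b' : b - a = b' - a' ->
  (forall t, a <= t <= b -> w t = w' (t - a + a')) -> restrZ w a b = restrZ w' a' b'.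
Proof.
  intros Hl H. apply nth_ext with (d := w a) (d' := w a).
  - rewrite !length_restrZ. f_equal. lia.
  - intros n Hn. rewrite length_restrZ in Hn. rewrite !nth_restrZ by lia.
    rewrite H by lia. f_equal. lia.
Qed.

Lemma restrZ_nil {A} (w : Z -> A) a b : b < a -> restrZ w a b = [].
Proof. intros. unfold restrZ. replace (Z.to_nat (b - a + 1)) with 0%nat by lia. reflexivity. Qed.

Lemma restrZ_cons {A} (w : Z -> A) a b : a <= b -> restrZ w a b = w a :: restrZ w (a+1) b.
Proof.
  intros H. apply nth_ext with (d := w a) (d' := w a).
  - simpl. rewrite !length_restrZ. lia.
  - intros n Hn. rewrite length_restrZ in Hn. rewrite nth_restrZ by lia.
    destruct n as [|n]; simpl. f_equal; lia.
    rewrite nth_restrZ by lia. f_equal; lia.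
Qed.

Lemma restrZ_app {A} (w : Z -> A) a b c : a <= b + 1 -> b <= c ->
  restrZ w a b ++ restrZ w (b+1) c = restrZ w a c.
Proof.
  intros H1 H2. apply nth_ext with (d := w a) (d' := w a).
  - rewrite length_app, !length_restrZ. lia.
  - intros n Hn. rewrite length_app, !length_restrZ in Hn.
    rewrite (nth_restrZ w a c) by lia.
    destruct (Nat.ltb_spec n (Z.to_nat (b - a + 1))).
    + rewrite app_nth1 by (rewrite length_restrZ; lia). rewrite nth_restrZ by lia. reflexivity.
    + rewrite app_nth2 by (rewrite length_restrZ; lia). rewrite length_restrZ.
      rewrite nth_restrZ by lia. f_equal; lia.
Qed.

Lemma restrL_restrZ {A} (w : Z -> A) a b c d : 0 <= c -> d <= b - a ->
  restrL (restrZ w a b) c d = restrZ w (a + c) (a + d).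
Proof.
  intros H1 H2. unfold restrL. destruct (Z.ltb_spec d c).
  - rewrite restrZ_nil by lia. reflexivity.
  - apply nth_ext with (d := w a) (d' := w a).
    + rewrite length_firstn, length_skipn, !length_restrZ. lia.
    + intros n Hn. rewrite length_firstn, length_skipn, !length_restrZ in Hn.
      rewrite nth_firstn. destruct (Nat.ltb_spec n (Z.to_nat (d - c + 1))); [|lia].
      rewrite nth_skipn. rewrite !nth_restrZ. f_equal; lia. all: lia.
Qed.

Lemma restrL_full {A} (s : list A) : restrL s 0 (Z.of_nat (length s) - 1) = s.
Proof.
  unfold restrL. destruct (Z.ltb_spec (Z.of_nat (length s) - 1) 0).
  - destruct s; [reflexivity|]. cbn [length] in *; lia.
  - simpl. apply firstn_all2. lia.
Qed.

Lemma restrL_empty {A} (s : list A) a : restrL s a (a - 1) = [].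
Proof. unfold restrL. destruct (Z.ltb_spec (a-1) a); [reflexivity|lia]. Qed.

Section T.
Variables (X U Y : Type) (delta : X -> U -> Y -> X -> Prop) (X0 : X -> Prop) (b : bool).

Definition sg (mu : nat -> U) (nu : nat -> Y) (t : Z) : option (Wt U Y b) :=
  if t <? 0 then None else Some (piW b (mu (Z.to_nat t)) (nu (Z.to_nat t))).

Lemma E_char a c x zeta : E delta X0 b a c x zeta <->
  exists mu nu xi (k : nat), full_beh delta X0 mu nu xi /\ xi k = x /\
    zeta = restrZ (sg mu nu) (Z.of_nat k + a) (Z.of_nat k + c).
Proof.
  split.
  - intros (w & xs & k & (mu & nu & xi & Hf & Hw) & Hx & Hz).
    exists mu, nu, xi, k. split; [exact Hf|]. split.
    + destruct (Hw (Z.of_nat k)) as [_ H]. destruct H as [_ H]; [lia|].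
      rewrite Hx, Nat2Z.id in H. congruence.
    + rewrite Hz. apply restrZ_eq; [lia|]. intros t _. replace (t - _ + _) with t by lia.
      unfold sg. destruct (Hw t) as [H1 H2]. destruct (Z.ltb_spec t 0).
      * apply H1; lia.
      * apply H2; lia.
  - intros (mu & nu & xi & k & Hf & Hx & Hz).
    exists (sg mu nu), (fun t => if t <? 0 then None else Some (xi (Z.to_nat t))), k.
    split; [|split].
    + exists mu, nu, xi. split; [exact Hf|]. intros t. unfold sg.
      destruct (Z.ltb_spec t 0); split; intros; try lia; auto.
    + destruct (Z.ltb_spec (Z.of_nat k) 0); [lia|]. rewrite Nat2Z.id, Hx. reflexivity.
    + exact Hz.
Qed.

Lemma Beh_char w : Beh delta X0 b w ->
  exists mu nu xi, full_beh delta X0 mu nu xi /\ forall t, w t = sg mu nu t.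
Proof.
  intros (mu & nu & xi & Hf & Hw). exists mu, nu, xi. split; [exact Hf|].
  intros t. unfold sg. destruct (Hw t) as [H1 H2]. destruct (Z.ltb_spec t 0).
  - apply H1; lia.
  - apply H2; lia.
Qed.

Lemma splice mu1 nu1 xi1 k1 x u y x' mu2 nu2 xi2 k2 :
  full_beh delta X0 mu1 nu1 xi1 -> xi1 k1 = x -> delta x u y x' ->
  full_beh delta X0 mu2 nu2 xi2 -> xi2 k2 = x' ->
  exists mu nu xi, full_beh delta X0 mu nu xi /\ xi k1 = x /\ xi (S k1) = x' /\
    (forall t, t < Z.of_nat k1 -> sg mu nu t = sg mu1 nu1 t) /\
    sg mu nu (Z.of_nat k1) = Some (piW b u y) /\
    (forall t, t > Z.of_nat k1 -> sg mu nu t = sg mu2 nu2 (t - Z.of_nat k1 - 1 + Z.of_nat k2)).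
Proof.
  intros [H10 H1] Hx Hd [H20 H2] Hx'.
  exists (fun j => if (j <? k1)%nat then mu1 j else if (j =? k1)%nat then u else mu2 (j - S k1 + k2)%nat).
  exists (fun j => if (j <? k1)%nat then nu1 j else if (j =? k1)%nat then y else nu2 (j - S k1 + k2)%nat).
  exists (fun j => if (j <=? k1)%nat then xi1 j else xi2 (j - S k1 + k2)%nat).
  split; [split|].
  - simpl. exact H10.
  - intros j. destruct (Nat.ltb_spec j k1).
    + destruct (Nat.leb_spec j k1); [|lia]. destruct (Nat.leb_spec (S j) k1); [|lia]. apply H1.
    + destruct (Nat.eqb_spec j k1).
      * subst j. destruct (Nat.leb_spec k1 k1); [|lia]. destruct (Nat.leb_spec (S k1) k1); [lia|].
        replace (S k1 - S k1 + k2)%nat with k2 by lia. rewrite Hx, Hx'. exact Hd.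
      * destruct (Nat.leb_spec j k1); [lia|]. destruct (Nat.leb_spec (S j) k1); [lia|].
        replace (S j - S k1 + k2)%nat with (S (j - S k1 + k2)) by lia. apply H2.
  - split; [|split; [|split; [|split]]].
    + destruct (Nat.leb_spec k1 k1); [exact Hx|lia].
    + destruct (Nat.leb_spec (S k1) k1); [lia|]. replace (S k1 - S k1 + k2)%nat with k2 by lia. exact Hx'.
    + intros t Ht. unfold sg. destruct (Z.ltb_spec t 0); [reflexivity|].
      destruct (Nat.ltb_spec (Z.to_nat t) k1); [reflexivity|lia].
    + unfold sg. destruct (Z.ltb_spec (Z.of_nat k1) 0); [lia|]. rewrite Nat2Z.id.
      destruct (Nat.ltb_spec k1 k1); [lia|]. rewrite Nat.eqb_refl. reflexivity.
    + intros t Ht. unfold sg. destruct (Z.ltb_spec t 0); [lia|].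
      destruct (Z.ltb_spec (t - Z.of_nat k1 - 1 + Z.of_nat k2) 0); [lia|].
      destruct (Nat.ltb_spec (Z.to_nat t) k1); [lia|]. destruct (Nat.eqb_spec (Z.to_nat t) k1); [lia|].
      replace (Z.to_nat t - S k1 + k2)%nat with (Z.to_nat (t - Z.of_nat k1 - 1 + Z.of_nat k2)) by lia.
      reflexivity.
Qed.

End T.
Arguments sg {U Y} b mu nu t.
Arguments splice {X U Y delta X0} b {mu1 nu1 xi1 k1 x u y x' mu2 nu2 xi2 k2}.

Ltac req := apply restrZ_eq; [lia | intros ? ?; f_equal; lia].

Lemma restrL_full' {A} (s : list A) n : length s = n -> restrL s 0 (Z.of_nat n - 1) = s.
Proof. intros <-. apply restrL_full. Qed.

Lemma restrZ_single {A} (w : Z -> A) a : restrZ w a a = [w a].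
Proof. rewrite restrZ_cons by lia. rewrite restrZ_nil by lia. reflexivity. Qed.

Lemma restrZ_app' {A} (w : Z -> A) a b b' c : a <= b + 1 -> b <= c -> b' = b + 1 ->
  restrZ w a b ++ restrZ w b' c = restrZ w a c.
Proof. intros ? ? ->. apply restrZ_app; lia. Qed.

Lemma restrZ_fold {A} (w : Z -> A) a a' b : a <= b -> a' = a + 1 ->
  w a :: restrZ w a' b = restrZ w a b.
Proof. intros ? ->. symmetry. apply restrZ_cons; lia. Qed.

Lemma sg_nonneg {U Y} (b : bool) (mu : nat -> U) (nu : nat -> Y) (k : nat) : sg b mu nu (Z.of_nat k) = Some (piW b (mu k) (nu k)).
Proof. unfold sg. destruct (Z.ltb_spec (Z.of_nat k) 0); [lia|]. now rewrite Nat2Z.id. Qed.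

Section M.
Variables (X U Y : Type) (delta : X -> U -> Y -> X -> Prop) (X0 : X -> Prop) (b : bool) (l m : nat).
Hypothesis Hlr : live_reachable delta X0.
Hypothesis Hml : (m <= l)%nat.


Lemma part1_fwd : future_unique delta X0 b l m ->
  sim_rel true (Qm delta X0) (Qhat delta X0 b l m) (Rel delta X0 b l m).
Proof.
  intros HFU. split; [|split].
  - intros x s H. split; [exact I|]. exists x. exact H.
  - intros x Hx. simpl in x, Hx |- *.
    destruct (proj1 Hlr x Hx) as (mu & nu & xi & Hf & H0).
    exists (restrZ (sg b mu nu) (Z.of_nat 0 + Ilo l m) (Z.of_nat 0 + Ihi m)).
    assert (HE : E delta X0 b (Ilo l m) (Ihi m) x
       (restrZ (sg b mu nu) (Z.of_nat 0 + Ilo l m) (Z.of_nat 0 + Ihi m))).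
    { apply E_char. exists mu, nu, xi, 0%nat. auto. }
    split; [exists x; auto | exact HE].
  - intros x s u y x' HR Hd. simpl in *.
    apply E_char in HR as (mu1 & nu1 & xi1 & k & Hf1 & Hx1 & Hs).
    destruct (proj2 Hlr x') as (mu2 & nu2 & xi2 & k2 & Hf2 & Hx2).
    destruct (splice b Hf1 Hx1 Hd Hf2 Hx2)
      as (mu & nu & xi & Hf & Hxk & HxSk & Hpast & Hnow & Hfut).
    exists u, y, (restrZ (sg b mu nu) (Z.of_nat (S k) + Ilo l m) (Z.of_nat (S k) + Ihi m)).
    split; [|split; [|reflexivity]].
    2: { apply E_char. exists mu, nu, xi, (S k). auto. }
    unfold deltahat, Ilo, Ihi in *. subst s.
    split; [|split].
    + rewrite !restrL_restrZ by lia.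
      assert (restrZ (sg b mu1 nu1) (Z.of_nat k + (Z.of_nat m - Z.of_nat l) + 0)
         (Z.of_nat k + (Z.of_nat m - Z.of_nat l) + (Z.of_nat l - Z.of_nat m - 1))
        = restrZ (sg b mu nu) (Z.of_nat k + (Z.of_nat m - Z.of_nat l)) (Z.of_nat k - 1)) as ->.
      { apply restrZ_eq; [lia|]. intros t Ht. rewrite Hpast by lia. f_equal; lia. }
      rewrite <- Hnow, <- restrZ_single, restrZ_app' by lia.
      rewrite restrL_restrZ by lia. req.
    + rewrite !restrL_restrZ by lia.
      assert (HE1 : E delta X0 b (Z.of_nat m - Z.of_nat l) (Z.of_nat m - 1) x
        (restrZ (sg b mu1 nu1) (Z.of_nat k + (Z.of_nat m - Z.of_nat l)) (Z.of_nat k + (Z.of_nat m - 1)))).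
      { apply E_char. exists mu1, nu1, xi1, k. auto. }
      assert (HE2 : E delta X0 b (Z.of_nat m - Z.of_nat l) (Z.of_nat m - 1) x
        (restrZ (sg b mu nu) (Z.of_nat k + (Z.of_nat m - Z.of_nat l)) (Z.of_nat k + (Z.of_nat m - 1)))).
      { apply E_char. exists mu, nu, xi, k. auto. }
      specialize (HFU x _ _ HE1 HE2). unfold Ilo, Ihi in HFU.
      rewrite !restrL_restrZ in HFU by lia. rewrite HFU.
      destruct m as [|m'].
      * rewrite restrZ_nil by lia. rewrite restrL_empty. reflexivity.
      * rewrite <- Hnow.
        rewrite restrZ_fold by lia. rewrite restrL_restrZ by lia. req.
    + exists x, x'. split; [|split; [|exact Hd]].
      * apply E_char. exists mu1, nu1, xi1, k. auto.
      * apply E_char. exists mu, nu, xi, (S k). auto.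
Qed.

Lemma part1_claim : sim_rel true (Qm delta X0) (Qhat delta X0 b l m) (Rel delta X0 b l m) ->
  forall j : nat, (j < m)%nat -> forall x mu1 nu1 xi1 k1 mu2 nu2 xi2 k2,
  full_beh delta X0 mu1 nu1 xi1 -> xi1 k1 = x ->
  full_beh delta X0 mu2 nu2 xi2 -> xi2 k2 = x ->
  sg b mu1 nu1 (Z.of_nat k1 + Z.of_nat j) = sg b mu2 nu2 (Z.of_nat k2 + Z.of_nat j).
Proof.
  intros (_ & _ & Hsim) j. induction j as [|j IH]; intros Hj x mu1 nu1 xi1 k1 mu2 nu2 xi2 k2 Hf1 Hx1 Hf2 Hx2.
  all: assert (HR : Rel delta X0 b l m x (restrZ (sg b mu1 nu1) (Z.of_nat k1 + Ilo l m) (Z.of_nat k1 + Ihi m)))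
       by (apply E_char; exists mu1, nu1, xi1, k1; auto).
  all: assert (Hd : delta x (mu2 k2) (nu2 k2) (xi2 (S k2))) by (rewrite <- Hx2; apply (proj2 Hf2)).
  all: destruct (Hsim _ _ _ _ _ HR Hd) as (u' & y' & s' & Hdh & HR' & Hp); simpl in Hp;
       injection Hp as <- <-.
  all: apply E_char in HR' as (mu3 & nu3 & xi3 & k3 & Hf3 & Hx3 & Hs3).
  all: destruct Hdh as (_ & H2 & _); subst s'; unfold Ilo, Ihi in *.
  all: rewrite !restrL_restrZ in H2 by lia.
  all: rewrite restrL_full' in H2 by (simpl; rewrite length_restrZ; lia).
  - rewrite !Z.add_0_r. rewrite (sg_nonneg b mu2 nu2 k2).
    assert (H := f_equal (fun s => nth 0 s None) H2). simpl in H.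
    rewrite nth_restrZ in H by lia. rewrite <- H. f_equal; lia.
  - assert (H := f_equal (fun s => nth (S j) s None) H2). simpl in H.
    rewrite !nth_restrZ in H by lia.
    pose proof (IH ltac:(lia) _ mu3 nu3 xi3 k3 mu2 nu2 xi2 (S k2) Hf3 Hx3 Hf2 eq_refl) as H'.
    replace (Z.of_nat k1 + Z.of_nat (S j)) with (Z.of_nat k1 + (Z.of_nat m - Z.of_nat l) + (Z.of_nat l - Z.of_nat m) + Z.of_nat (S j)) by lia.
    rewrite H.
    replace (Z.of_nat k2 + Z.of_nat (S j)) with (Z.of_nat (S k2) + Z.of_nat j) by lia.
    rewrite <- H'. f_equal; lia.
Qed.

Lemma part1_bwd : sim_rel true (Qm delta X0) (Qhat delta X0 b l m) (Rel delta X0 b l m) ->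
  future_unique delta X0 b l m.
Proof.
  intros Hsim x z z' Hz Hz'.
  apply E_char in Hz as (mu1 & nu1 & xi1 & k1 & Hf1 & Hx1 & ->).
  apply E_char in Hz' as (mu2 & nu2 & xi2 & k2 & Hf2 & Hx2 & ->).
  unfold Ilo, Ihi. rewrite !restrL_restrZ by lia.
  apply restrZ_eq; [lia|]. intros t Ht.
  pose proof (part1_claim Hsim (Z.to_nat (t - Z.of_nat k1)) ltac:(lia) x mu1 nu1 xi1 k1 mu2 nu2 xi2 k2 Hf1 Hx1 Hf2 Hx2) as H.
  rewrite Z2Nat.id in H by lia.
  replace t with (Z.of_nat k1 + (t - Z.of_nat k1)) at 1 by lia. rewrite H. f_equal; lia.
Qed.

Lemma Beh_sg mu nu xi : full_beh delta X0 mu nu xi -> Beh delta X0 b (sg b mu nu).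
Proof.
  intros Hf. exists mu, nu, xi. split; [exact Hf|]. intros k. unfold sg.
  destruct (Z.ltb_spec k 0); split; intros; auto; lia.
Qed.

Lemma part2_fwd : async_complete delta X0 b l m ->
  sim_rel b (Qhat delta X0 b l m) (Qm delta X0) (fun s x => Rel delta X0 b l m x s).
Proof.
  intros HA. split; [|split].
  - intros s x H. split; [exists x; exact H|exact I].
  - intros s (x & Hx & HE). exists x. auto.
  - intros s x u y s' HR Hdh. simpl in *.
    destruct Hdh as (H1 & H2 & x0 & x0' & HE0 & HE0' & Hd).
    apply E_char in HE0 as (mu1 & nu1 & xi1 & k1 & Hf1 & Hx1 & Hs).
    apply E_char in HE0' as (mu2 & nu2 & xi2 & k2 & Hf2 & Hx2 & Hs').
    destruct (splice b Hf1 Hx1 Hd Hf2 Hx2)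
      as (mu & nu & xi & Hf & Hxk & HxSk & Hpast & Hnow & Hfut).
    set (zeta := restrZ (sg b mu nu) (Z.of_nat k1 + Ilo l m) (Z.of_nat k1 + Z.of_nat m)).
    unfold Ilo, Ihi in *.
    subst s s'.
    assert (Hfu : restrZ (sg b mu1 nu1) (Z.of_nat k1) (Z.of_nat k1 + Z.of_nat m - 1)
                = restrZ (sg b mu nu) (Z.of_nat k1) (Z.of_nat k1 + Z.of_nat m - 1)).
    { destruct m as [|m'].
      - rewrite !restrZ_nil by lia. reflexivity.
      - rewrite !restrL_restrZ in H2 by lia.
        rewrite (restrZ_eq (sg b mu2 nu2) (sg b mu nu) _ _ (Z.of_nat k1 + 1) (Z.of_nat k1 + Z.of_nat (S m') - 1)) in H2
          by (lia || (intros t Ht; rewrite Hfut by lia; f_equal; lia)).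
        rewrite <- Hnow, restrZ_fold in H2 by lia.
        rewrite restrL_restrZ in H2 by lia.
        rewrite (restrZ_eq (sg b mu1 nu1) (sg b mu1 nu1) _ _ (Z.of_nat k1) (Z.of_nat k1 + Z.of_nat (S m') - 1)) in H2
          by (lia || (intros t Ht; f_equal; lia)).
        rewrite H2. apply restrZ_eq; [lia|]. intros; f_equal; lia. }
    assert (Hfst : restrL zeta 0 (Z.of_nat l - 1) =
       restrZ (sg b mu1 nu1) (Z.of_nat k1 + (Z.of_nat m - Z.of_nat l)) (Z.of_nat k1 + (Z.of_nat m - 1))).
    { subst zeta. rewrite restrL_restrZ by lia.
      rewrite <- (restrZ_app' (sg b mu nu) _ (Z.of_nat k1 - 1) (Z.of_nat k1)) by lia.
      rewrite <- (restrZ_app' (sg b mu1 nu1) _ (Z.of_nat k1 - 1) (Z.of_nat k1)) by lia.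
      f_equal.
      + apply restrZ_eq; [lia|]. intros t Ht. rewrite Hpast by lia. f_equal; lia.
      + rewrite (restrZ_eq (sg b mu1 nu1) (sg b mu1 nu1) _ (Z.of_nat k1 + (Z.of_nat m - 1)) (Z.of_nat k1) (Z.of_nat k1 + Z.of_nat m - 1))
          by (lia || (intros t Ht; f_equal; lia)).
        rewrite Hfu. apply restrZ_eq; [lia|]. intros; f_equal; lia. }
    assert (HP : Pi U Y b (S l) (Beh delta X0 b) zeta).
    { exists (sg b mu nu), (k1 + m)%nat. split; [eapply Beh_sg; exact Hf|]. subst zeta. req. }
    assert (HEx : E delta X0 b (Ilo l m) (Ihi m) x (restrL zeta 0 (Z.of_nat l - 1))).
    { rewrite Hfst. exact HR. }
    pose proof (HA x zeta HP HEx) as HE3.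
    apply E_char in HE3 as (mu3 & nu3 & xi3 & k3 & Hf3 & Hx3 & Hz3).
    unfold Ilo in Hz3.
    exists (mu3 k3), (nu3 k3), (xi3 (S k3)). split; [|split].
    * rewrite <- Hx3. apply (proj2 Hf3).
    * apply E_char. exists mu3, nu3, xi3, (S k3). split; [exact Hf3|]. split; [reflexivity|].
      unfold Ilo, Ihi.
      assert (Hz := f_equal (fun z => restrL z 1 (Z.of_nat l)) Hz3). simpl in Hz.
      subst zeta. rewrite !restrL_restrZ in Hz by lia.
      rewrite (restrZ_eq (sg b mu3 nu3) (sg b mu3 nu3) _ _ (Z.of_nat (S k3) + (Z.of_nat m - Z.of_nat l)) (Z.of_nat (S k3) + (Z.of_nat m - 1)))
        in Hz by (lia || (intros t Ht; f_equal; lia)).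
      rewrite <- Hz.
      rewrite !restrL_restrZ in H1 by lia.
      rewrite <- Hnow, <- restrZ_single in H1.
      rewrite (restrZ_eq (sg b mu1 nu1) (sg b mu nu) _ _ (Z.of_nat k1 + (Z.of_nat m - Z.of_nat l)) (Z.of_nat k1 - 1))
        in H1 by (lia || (intros t Ht; rewrite Hpast by lia; f_equal; lia)).
      rewrite restrZ_app' in H1 by lia.
      rewrite restrL_restrZ in H1 by lia.
      rewrite <- (restrZ_app' (sg b mu2 nu2) _ (Z.of_nat k2 - 1) (Z.of_nat k2)) by lia.
      rewrite <- (restrZ_app' (sg b mu nu) _ (Z.of_nat k1) (Z.of_nat k1 + 1)) by lia.
      f_equal.
      + rewrite (restrZ_eq (sg b mu2 nu2) (sg b mu2 nu2) _ (Z.of_nat k2 - 1) (Z.of_nat k2 + (Z.of_nat m - Z.of_nat l) + 0) (Z.of_nat k2 + (Z.of_nat m - Z.of_nat l) + (Z.of_nat l - Z.of_nat m - 1)))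
          by (lia || (intros t Ht; f_equal; lia)).
        rewrite H1. apply restrZ_eq; [lia|]. intros; f_equal; lia.
      + apply restrZ_eq; [lia|]. intros t Ht. rewrite (Hfut (t - Z.of_nat k2 + (Z.of_nat k1 + 1))) by lia.
        f_equal; lia.
    * assert (Hn := f_equal (fun z => nth (l - m) z None) Hz3). simpl in Hn.
      subst zeta. rewrite !nth_restrZ in Hn by lia.
      replace (Z.of_nat k1 + (Z.of_nat m - Z.of_nat l) + Z.of_nat (l - m)) with (Z.of_nat k1) in Hn by lia.
      replace (Z.of_nat k3 + (Z.of_nat m - Z.of_nat l) + Z.of_nat (l - m)) with (Z.of_nat k3) in Hn by lia.
      rewrite Hnow, sg_nonneg in Hn. injection Hn as Hn. exact Hn.
Qed.

Lemma part2_bwd :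
  sim_rel b (Qhat delta X0 b l m) (Qm delta X0) (fun s x => Rel delta X0 b l m x s) ->
  async_complete delta X0 b l m.
Proof.
  intros (_ & _ & Hsim) x zeta (w & K & HB & Hz) HE.
  apply Beh_char in HB as (mu0 & nu0 & xi0 & Hf0 & Hw).
  assert (Hz0 : zeta = restrZ (sg b mu0 nu0) (Z.of_nat K - Z.of_nat l) (Z.of_nat K)).
  { rewrite Hz. apply restrZ_eq; [lia|]. intros t Ht. rewrite Hw. f_equal; lia. }
  clear Hz. subst zeta.
  rewrite restrL_restrZ in HE by lia.
  set (s := restrZ (sg b mu0 nu0) (Z.of_nat K - Z.of_nat l + 0) (Z.of_nat K - Z.of_nat l + (Z.of_nat l - 1))) in HE.
  pose proof HE as HE'.
  apply E_char in HE' as (mu1 & nu1 & xi1 & k1 & Hf1 & Hx1 & Hs1).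
  unfold Ilo, Ihi in Hs1.
  assert (HKm : (m <= K)%nat).
  { destruct m as [|m']; [lia|]. destruct (Nat.leb_spec (S m') K) as [|HK]; [assumption|exfalso].
    assert (Hn := f_equal (fun z => nth (l - S m') z None) Hs1). cbv beta in Hn. subst s.
    rewrite !nth_restrZ in Hn by lia.
    unfold sg at 1 in Hn. destruct (Z.ltb_spec (Z.of_nat K - Z.of_nat l + 0 + Z.of_nat (l - S m')) 0); [|lia].
    replace (Z.of_nat k1 + (Z.of_nat (S m') - Z.of_nat l) + Z.of_nat (l - S m')) with (Z.of_nat k1) in Hn by lia.
    rewrite sg_nonneg in Hn. discriminate. }
  set (K' := (K - m)%nat).
  set (s' := restrZ (sg b mu0 nu0) (Z.of_nat K - Z.of_nat l + 1) (Z.of_nat K)).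
  assert (HK' : Z.of_nat K' = Z.of_nat K - Z.of_nat m) by (subst K'; lia).
  assert (Hdh : deltahat delta X0 b l m s (mu0 K') (nu0 K') s').
  { unfold deltahat. split; [|split].
    - subst s s'. rewrite !restrL_restrZ by lia.
      rewrite <- (sg_nonneg b mu0 nu0 K'), <- restrZ_single, restrZ_app' by lia.
      rewrite restrL_restrZ by lia. req.
    - subst s s'. rewrite !restrL_restrZ by lia.
      destruct m as [|m'].
      + rewrite restrZ_nil by lia. rewrite restrL_empty. reflexivity.
      + rewrite <- (sg_nonneg b mu0 nu0 K'), restrZ_fold by lia.
        rewrite restrL_restrZ by lia. req.
    - exists (xi0 K'), (xi0 (S K')). split; [|split].
      + apply E_char. exists mu0, nu0, xi0, K'. split; [exact Hf0|]. split; [reflexivity|].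
        subst s. unfold Ilo, Ihi. req.
      + apply E_char. exists mu0, nu0, xi0, (S K'). split; [exact Hf0|]. split; [reflexivity|].
        subst s'. unfold Ilo, Ihi. req.
      + apply (proj2 Hf0). }
  destruct (Hsim s x (mu0 K') (nu0 K') s' HE Hdh) as (u2 & y2 & x' & Hd & HR' & Hp).
  simpl in Hd, HR', Hp.
  apply E_char in HR' as (mu2 & nu2 & xi2 & k2 & Hf2 & Hx2 & Hs2).
  unfold Ilo, Ihi in Hs2.
  destruct (splice b Hf1 Hx1 Hd Hf2 Hx2)
    as (mu & nu & xi & Hf & Hxk & HxSk & Hpast & Hnow & Hfut).
  apply E_char. exists mu, nu, xi, k1. split; [exact Hf|]. split; [exact Hxk|].
  unfold Ilo.
  rewrite <- (restrZ_app' (sg b mu0 nu0) _ (Z.of_nat K - Z.of_nat m - 1) (Z.of_nat K - Z.of_nat m)) by lia.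
  rewrite <- (restrZ_app' (sg b mu nu) _ (Z.of_nat k1 - 1) (Z.of_nat k1)) by lia.
  f_equal.
  - assert (H := f_equal (fun z => restrL z 0 (Z.of_nat l - Z.of_nat m - 1)) Hs1). cbv beta in H.
    subst s. rewrite !restrL_restrZ in H by lia.
    etransitivity; [|etransitivity; [exact H|]].
    + req.
    + apply restrZ_eq; [lia|]. intros t Ht. rewrite Hpast by lia. f_equal; lia.
  - rewrite (restrZ_cons (sg b mu0 nu0)) by lia. rewrite (restrZ_cons (sg b mu nu)) by lia.
    f_equal.
    + rewrite <- HK', sg_nonneg, Hnow, Hp. reflexivity.
    + assert (H := f_equal (fun z => restrL z (Z.of_nat l - Z.of_nat m) (Z.of_nat l - 1)) Hs2). cbv beta in H.
      subst s'. rewrite !restrL_restrZ in H by lia.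
      etransitivity; [|etransitivity; [exact H|]].
      * req.
      * apply restrZ_eq; [lia|]. intros t Ht. rewrite (Hfut (t - _ + (Z.of_nat k1 + 1))) by lia. f_equal; lia.
Qed.
End M.

Theorem theorem3 (X U Y : Type) (delta : X -> U -> Y -> X -> Prop) (X0 : X -> Prop)
  (b : bool) (l m : nat) :
  live_reachable delta X0 ->
  (forall x u y x', delta x u y x' <-> (Fdelta delta x u x' /\ Hdelta delta x y)) ->
  W_finite U Y b ->
  (m <= l)%nat ->
  (sim_rel true (Qm delta X0) (Qhat delta X0 b l m) (Rel delta X0 b l m)
     <-> future_unique delta X0 b l m) /\
  (sim_rel b (Qhat delta X0 b l m) (Qm delta X0)
     (fun s x => Rel delta X0 b l m x s)
     <-> async_complete delta X0 b l m).
Proof.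
  intros Hlr _ _ Hml. split; split; intros H.
  - eapply part1_bwd; eauto.
  - eapply part1_fwd; eauto.
  - eapply part2_bwd; eauto.
  - eapply part2_fwd; eauto.
Qed.
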